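(* Let $q$ be a prime power, $n=q^4-1$, and let $0\le a_2,a_3<q$ with $a_2+a_3<q-1$. Then the interlude $[(a_2,a_3,a_2,a_3),(a_2+1,a_3,a_2+1,a_3)]_M$ contains exactly $a_3(q-a_3)$ minimal representatives of SR-asymmetric cosets of cardinality $2$.
   Context: Identify $\mathbb{Z}_n$ with $\{0,\ldots,n-1\}$, all arithmetic modulo $n$. The $q$-adic 4-tuple $(a_0,a_1,a_2,a_3)$ denotes $a_0+a_1q+a_2q^2+a_3q^3$ with $0\le a_i<q$. The cyclotomic coset of $x$ with respect to $q^2$ is $I_x=\{x,\,q^2x\bmod n\}$; its minimal representative is its least element. The (Hermitian) reciprocal coset of $I_x$ is $I_{n-qx}$. $I_x$ is symmetric if $I_{n-qx}=I_x$ and asymmetric otherwise; for an asymmetric pair with minimal representatives $x<y$, $I_x$ is FR-asymmetric and $I_y$ is SR-asymmetric. For $0\le a<q-1$, $0\le b<q$, the interlude $[(a,b,a,b),(a+1,b,a+1,b)]_M$ is the set of integers $x$ with $(a,b,a,b)<x<(a+1,b,a+1,b)$ that are minimal representatives of a coset of cardinality $2$. *)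

(* Defs.v *)
From mathcomp Require Import all_boot.
Set Implicit Arguments. Unset Strict Implicit. Unset Printing Implicit Defensive.

Definition prime_power (q : nat) : Prop :=
  exists p k, prime p /\ 0 < k /\ q = p ^ k.

Definition qadic4 (q a0 a1 a2 a3 : nat) : nat :=
  a0 + a1 * q + a2 * q ^ 2 + a3 * q ^ 3.

(* Cyclotomic coset of x w.r.t. q^2 in Z_n (elements of Z_n as 0..n-1):
   I_x = {x mod n, q^2 x mod n}, listed as a sequence. *)
Definition coset (n q x : nat) : seq nat := [:: x %% n; (q ^ 2 * x) %% n].

Definition coset_eq (n q x y : nat) : bool :=
  all (fun z => z \in coset n q y) (coset n q x) &&
  all (fun z => z \in coset n q x) (coset n q y).

Definition minrep (n q x : nat) : nat := minn (x %% n) ((q ^ 2 * x) %% n).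

Definition coset_card (n q x : nat) : nat := size (undup (coset n q x)).

Definition recip (n q x : nat) : nat := (n - (q * x) %% n) %% n.

Definition symmetric_coset (n q x : nat) : bool := coset_eq n q (recip n q x) x.

Definition SR_asymmetric (n q x : nat) : bool :=
  ~~ symmetric_coset n q x && (minrep n q (recip n q x) < minrep n q x).

Definition minrep_card2 (n q x : nat) : bool :=
  (x < n) && (x == minrep n q x) && (coset_card n q x == 2).

Definition interlude (n q lo hi : nat) : seq nat :=
  [seq x <- iota lo.+1 (hi - lo.+1) | minrep_card2 n q x].

(* Main.v *)
Require Import Defs.
From mathcomp Require Import all_boot zify.
Set Warnings "-notation-overridden".

Lemma pows q : [/\ q ^ 2 = q * q, q ^ 3 = q * q * q & q ^ 4 = q * q * q * q].
Proof. by rewrite !expnS expn0 !muln1 !mulnA. Qed.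

Lemma qL1 q d0 d1 d2 d3 :
  q * qadic4 q d0 d1 d2 d3 + d3 = d3 * q ^ 4 + qadic4 q d3 d0 d1 d2.
Proof. case: (pows q) => e2 e3 e4; rewrite /qadic4 e2 e3 e4; lia. Qed.

Lemma qL2 q d0 d1 d2 d3 :
  q ^ 2 * qadic4 q d0 d1 d2 d3 + (d2 + d3 * q) = (d2 + d3 * q) * q ^ 4 + qadic4 q d2 d3 d0 d1.
Proof. case: (pows q) => e2 e3 e4; rewrite /qadic4 e2 e3 e4; lia. Qed.

Lemma qL4 q d0 d1 d2 d3 :
  0 < q -> d0 < q -> d1 < q -> d2 < q -> d3 < q ->
  qadic4 q d0 d1 d2 d3 + qadic4 q (q.-1 - d0) (q.-1 - d1) (q.-1 - d2) (q.-1 - d3) + 1 = q ^ 4.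
Proof.
case: (pows q) => e2 e3 e4; rewrite /qadic4 e2 e3 e4.
case: q {e2 e3 e4} => // p _ /=; rewrite !ltnS => h0 h1 h2 h3.
rewrite !mulnBl.
have k1 : d1 * p.+1 <= p * p.+1 by rewrite leq_mul2r h1 orbT.
have k2 : d2 * p.+1 * p.+1 <= p * p.+1 * p.+1 by rewrite !leq_mul2r h2 !orbT.
have k3 : d3 * p.+1 * p.+1 * p.+1 <= p * p.+1 * p.+1 * p.+1 by rewrite !leq_mul2r h3 !orbT.
lia.
Qed.

Lemma qlex q d0 d1 d2 d3 f0 f1 f2 f3 :
  d0 < q -> d1 < q -> d2 + d3 * q < f2 + f3 * q ->
  qadic4 q d0 d1 d2 d3 < qadic4 q f0 f1 f2 f3.
Proof.
move=> h0 h1 h.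
have h01 : d0 + d1 * q < q * q by nia.
have : (d2 + d3 * q).+1 * (q * q) <= (f2 + f3 * q) * (q * q) by rewrite leq_mul2r h orbT.
case: (pows q) => e2 e3 e4; rewrite /qadic4 e2 e3; lia.
Qed.

Lemma modn_eqE n a k r : r < n -> a = k * n + r -> a %% n = r.
Proof. by move=> rn ->; rewrite modnMDl modn_small. Qed.

Lemma pt_good q a2 a3 l0 l1 :
  1 < q -> a2 + a3 < q - 1 -> l0 < q -> l1 < q ->
  a2 + a3 * q < l0 + l1 * q ->
  let n := q ^ 4 - 1 in
  let x := l0 + l1 * q + a2 * q ^ 2 + a3 * q ^ 3 in
  minrep_card2 n q x && SR_asymmetric n q x = (q - a3 <= l0).
Proof.
move=> q1 ha hl0 hl1 hAL n x.
have e4 : q ^ 4 = q * q * (q * q) by rewrite !expnS expn0 !muln1; timeout 10 lia.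
have e3 : q ^ 3 = q * (q * q) by rewrite !expnS expn0 !muln1.
have e2 : q ^ 2 = q * q by rewrite !expnS expn0 !muln1.
set Q := q * q in e4 e3 e2.
have Q4 : 4 <= Q by rewrite /Q; timeout 10 nia.
have hn : n + 1 = Q * Q by rewrite /n e4; timeout 10 lia.
have hL : l0 + l1 * q < Q by rewrite /Q; timeout 10 nia.
set L := l0 + l1 * q in hAL hL.
set A := a2 + a3 * q in hAL.
have hA : A < Q - 1 by rewrite /A /Q; timeout 10 nia.
have hx : x = L + A * Q by rewrite /x e2 e3 /L /A; timeout 10 nia.
have sw : (q ^ 2 * x) %% n = A + L * Q.
  apply: (@modn_eqE _ _ A); first by timeout 10 nia.
  rewrite e2 hx; timeout 10 nia.
have xn : x < n.
  have h : A * Q <= (Q - 2) * Q by rewrite leq_mul2r; apply/orP; right; timeout 10 lia.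
  rewrite mulnBl in h. rewrite hx; timeout 10 lia.
have xsw : x < A + L * Q.
  have : 0 < (L - A) * (Q - 1) by rewrite muln_gt0; apply/andP; split; timeout 10 lia.
  move=> h; rewrite hx; rewrite mulnBl !mulnBr !muln1 in h; timeout 10 lia.
have mr : minrep n q x = x by rewrite /minrep sw modn_small // (minn_idPl (ltnW xsw)).
have mc : minrep_card2 n q x.
  rewrite /minrep_card2 xn mr eqxx /coset_card /coset sw modn_small //=.
  by rewrite inE (ltn_eqF xsw).
rewrite mc /=.
have q0 : 0 < q by timeout 15 lia.
have n4 : q ^ 4 = n + 1 by rewrite /n; have := expn_gt0 q 4; rewrite q0 /=; timeout 15 lia.
have ha2 : a2 < q by timeout 15 lia.
have ha3 : a3 < q by timeout 15 lia.
have hxq : x = qadic4 q l0 l1 a2 a3 by [].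
set r0 := qadic4 q a3 l0 l1 a2.
have [c0 ec0] : exists c, q.-1 - l0 = c by eexists.
have [c1 ec1] : exists c, q.-1 - l1 = c by eexists.
have [c2 ec2] : exists c, q.-1 - a2 = c by eexists.
have [c3 ec3] : exists c, q.-1 - a3 = c by eexists.
set R := qadic4 q c3 c0 c1 c2.
set S := qadic4 q c1 c2 c3 c0.
have sumR : r0 + R + 1 = n + 1 by have := @qL4 q a3 l0 l1 a2 q0 ha3 hl0 hl1 ha2; rewrite ec0 ec1 ec2 ec3 n4.
have sumS : qadic4 q l1 a2 a3 l0 + S + 1 = n + 1 by have := @qL4 q l1 a2 a3 l0 q0 hl1 ha2 ha3 hl0; rewrite ec0 ec1 ec2 ec3 n4.
have Rpos : 0 < R.
  have : 0 < c2 * q ^ 3 by rewrite muln_gt0 expn_gt0 q0 andbT; timeout 15 lia.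
  rewrite /R /qadic4; timeout 15 lia.
have L0 : 0 < l0 + l1 * q by timeout 15 lia.
have r0pos : 0 < r0.
  rewrite /r0 /qadic4; case: (posnP l0) => [z0|p0].
    have : 0 < l1 * q ^ 2 by rewrite muln_gt0 expn_gt0 q0 andbT; rewrite z0 in L0; timeout 15 lia.
    move=> h; clear -h; timeout 15 lia.
  have : 0 < l0 * q by rewrite muln_gt0 q0 andbT.
  move=> h; clear -h; timeout 15 lia.
have S'pos : 0 < qadic4 q l1 a2 a3 l0.
  rewrite /qadic4; case: (posnP l0) => [z0|p0].
    have : 0 < l1 by rewrite z0 in L0; timeout 15 lia.
    move=> h; clear -h; timeout 15 lia.
  have : 0 < l0 * q ^ 3 by rewrite muln_gt0 expn_gt0 q0 andbT.
  move=> h; clear -h; timeout 15 lia.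
have qx : (q * x) %% n = r0.
  apply: (@modn_eqE _ _ a3); first by move: sumR Rpos; clear; timeout 15 lia.
  have := qL1 q l0 l1 a2 a3; rewrite -hxq n4 -/r0; clear; timeout 15 lia.
have recE : recip n q x = R.
  have e : n - r0 = R by move: sumR; clear; timeout 15 lia.
  by rewrite /recip qx e modn_small //; move: sumR r0pos; clear; timeout 15 lia.
have RS : (q ^ 2 * R) %% n = S.
  apply: (@modn_eqE _ _ (c1 + c2 * q)); first by move: sumS S'pos; clear; timeout 15 lia.
  have := qL2 q c3 c0 c1 c2; rewrite -/R -/S n4; clear; timeout 15 lia.
have mrR : minrep n q R = minn R S by rewrite /minrep RS modn_small //; move: sumR r0pos; clear; timeout 15 lia.
have xR : x < R.
  rewrite hxq; apply: qlex => //.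
  have : a3.+1 * q <= c2 * q by rewrite leq_mul2r; apply/orP; right; move: ec2 ha; clear; timeout 15 lia.
  rewrite mulSn => h; move: h ha2; clear; timeout 15 lia.
rewrite /SR_asymmetric /symmetric_coset recE mrR mr.
case: (leqP (q - a3) l0) => hl.
  have Sx : S < x.
    rewrite hxq; apply: qlex; try by [move: ec1 q0; clear; timeout 15 lia | move: ec2 q0; clear; timeout 15 lia].
    have : c0.+1 * q <= a3 * q by rewrite leq_mul2r; apply/orP; right; move: ec0 hl hl0; clear; timeout 15 lia.
    rewrite mulSn => h; move: h ec3 q0; clear; timeout 15 lia.
  rewrite (minn_idPr (ltnW (ltn_trans Sx xR))) Sx andbT.
  rewrite /coset_eq /coset RS sw (modn_small xn) /= !inE.
  rewrite (ltn_eqF Sx) (ltn_eqF (ltn_trans Sx xsw)).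
  by rewrite !andbF.
have xS : x <= S.
  apply: ltnW; rewrite hxq; apply: qlex => //.
  have : a3 * q <= c0 * q by rewrite leq_mul2r; apply/orP; right; move: ec0 hl hl0; clear; timeout 15 lia.
  move=> h; move: h ec3 ha; clear; timeout 15 lia.
by rewrite ltnNge leq_min (ltnW xR) xS andbF.
Qed.

Lemma mod_range q j L : j * q <= L < j * q + q -> L %% q = L - j * q.
Proof.
move=> /andP [h1 h2].
have -> : L = j * q + (L - j * q) by lia.
by rewrite modnMDl modn_small; lia.
Qed.

Lemma count_const_true (P : pred nat) s : {in s, forall x, P x} -> count P s = size s.
Proof. by move=> h; rewrite -count_predT; apply: eq_in_count => x /h ->. Qed.

Lemma count_const_false (P : pred nat) s : {in s, forall x, ~~ P x} -> count P s = 0.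
Proof. by move=> h; rewrite -(count_pred0 s); apply: eq_in_count => x /h /negbTE ->. Qed.

Lemma block q a3 j : a3 <= q ->
  count (fun L => q - a3 <= L %% q) (iota (j * q) q) = a3.
Proof.
move=> ha.
have -> : iota (j * q) q = iota (j * q) (q - a3) ++ iota (j * q + (q - a3)) a3 by rewrite -iotaD subnK.
rewrite count_cat count_const_false ?count_const_true ?size_iota //.
  move=> L; rewrite mem_iota => /andP [h1 h2]; rewrite (@mod_range q j); lia.
move=> L; rewrite mem_iota => /andP [h1 h2]; rewrite (@mod_range q j); lia.
Qed.

Lemma blocks q a3 j k : a3 <= q ->
  count (fun L => q - a3 <= L %% q) (iota (j * q) (k * q)) = k * a3.
Proof.
move=> ha; elim: k j => [|k IH] j; first by rewrite mul0n.
rewrite mulSn iotaD count_cat block // [j * q + q]addnC -mulSn IH mulSn; lia.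
Qed.

Lemma pt_bad q A L : 1 < q -> A.+1 < q ^ 2 -> L <= A ->
  minrep_card2 (q ^ 4 - 1) q (L + A.+1 * q ^ 2) = false.
Proof.
move=> q1 hA hL.
have e4 : q ^ 4 = q ^ 2 * q ^ 2 by rewrite -expnD.
set Q := q ^ 2 in hA e4 *.
set n := q ^ 4 - 1.
have QQ : 0 < Q * Q by rewrite muln_gt0 andbb; lia.
have hn : n + 1 = Q * Q by rewrite /n e4; lia.
set x := L + A.+1 * Q.
have sw : (Q * x) %% n = A.+1 + L * Q.
  apply: (@modn_eqE _ _ A.+1).
    have : L * Q <= A * Q by rewrite leq_mul2r hL orbT.
    have : A.+1 * Q <= (Q - 1) * Q by rewrite leq_mul2r; apply/orP; right; lia.
    rewrite mulnBl mul1n; lia.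
  rewrite /x; nia.
have lt : A.+1 + L * Q < x.
  have : 0 < (A.+1 - L) * (Q - 1) by rewrite muln_gt0; apply/andP; split; lia.
  rewrite /x mulnBl !mulnBr !muln1 => h. lia.
apply/negbTE; rewrite /minrep_card2 /minrep sw.
apply/negP => /andP [/andP [_ /eqP h] _].
have : minn (x %% n) (A.+1 + L * Q) < x by rewrite gtn_min lt orbT.
by rewrite -h ltnn.
Qed.

Theorem mainTheorem15 (q a2 a3 : nat) :
  prime_power q -> a2 < q -> a3 < q -> a2 + a3 < q - 1 ->
  let n := q ^ 4 - 1 in
  count (SR_asymmetric n q)
    (interlude n q (qadic4 q a2 a3 a2 a3) (qadic4 q a2.+1 a3 a2.+1 a3))
  = a3 * (q - a3).
Proof.
move=> _ ha2 ha3 ha n.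
have q1 : 1 < q by lia.
have e3 : q ^ 3 = q * q ^ 2 by rewrite expnS.
have e2 : q ^ 2 = q * q by rewrite expnS expn1.
set A := a2 + a3 * q.
have hA : A.+1 < q ^ 2.
  have : a3.+1 * q <= q * q by rewrite leq_mul2r ha3 orbT.
  rewrite /A e2 mulSn; lia.
have elo : qadic4 q a2 a3 a2 a3 = A + A * q ^ 2 by rewrite /qadic4 /A e3; nia.
have ehi : qadic4 q a2.+1 a3 a2.+1 a3 = A.+1 + A.+1 * q ^ 2 by rewrite /qadic4 /A e3; nia.
rewrite /interlude count_filter elo ehi.
have -> : iota (A + A * q ^ 2).+1 (A.+1 + A.+1 * q ^ 2 - (A + A * q ^ 2).+1)
   = map (addn (A * q ^ 2)) (iota A.+1 (q ^ 2 - A.+1)) ++ iota (0 + A.+1 * q ^ 2) A.+1.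
  rewrite -iotaDl.
  have -> : 0 + A.+1 * q ^ 2 = (A * q ^ 2 + A.+1) + (q ^ 2 - A.+1) by rewrite mulSn; lia.
  rewrite -iotaD; congr iota; first lia.
  rewrite mulSn; lia.
rewrite count_cat count_map [X in _ + X]count_const_false ?addn0; last first.
  move=> y; rewrite mem_iota => /andP [h1 h2].
  have -> : y = (y - A.+1 * q ^ 2) + A.+1 * q ^ 2 by lia.
  by rewrite /= (@pt_bad q A) ?andbF //; lia.
rewrite (@eq_in_count _ _ (fun L => q - a3 <= L %% q)); last first.
  move=> L; rewrite mem_iota => /andP [h1 h2] /=.
  have hl0 : L %% q < q by rewrite ltn_mod; lia.
  have hl1 : L %/ q < q by rewrite ltn_divLR; lia.
  have h := @pt_good q a2 a3 (L %% q) (L %/ q) q1 ha hl0 hl1.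
  have eL : L %% q + L %/ q * q = L by rewrite addnC -divn_eq.
  rewrite eL in h; have {}h := h h1; simpl in h.
  have ex : A * q ^ 2 + L = L + a2 * q ^ 2 + a3 * q ^ 3 by rewrite /A e3; nia.
  by rewrite ex andbC h.
set k1 := q - a3 - a2 - 1.
have -> : iota A.+1 (q ^ 2 - A.+1) = iota A.+1 k1 ++ iota (A.+1 + k1) a3 ++ iota (a3.+1 * q) ((q - a3.+1) * q).
  have -> : a3.+1 * q = A.+1 + k1 + a3 by rewrite /k1 /A mulSn; lia.
  rewrite -iotaD -iotaD; congr iota.
  rewrite e2 mulnBl /A /k1 mulSn; have : a3.+1 * q <= q * q by rewrite leq_mul2r ha3 orbT.
  rewrite mulSn; lia.
rewrite !count_cat blocks; last lia.
rewrite count_const_false; last first.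
  move=> L; rewrite mem_iota => /andP [h1 h2] /=.
  rewrite (@mod_range q a3); lia.
rewrite count_const_true ?size_iota; last first.
  move=> L; rewrite mem_iota => /andP [h1 h2] /=.
  rewrite (@mod_range q a3); lia.
rewrite mulnBl mulnBr mulSn [q * a3]mulnC.
have : a3 * a3.+1 <= a3 * q by rewrite leq_mul2l ha3 orbT.
rewrite mulnS; lia.
Qed.
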